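(* Let $(X,f)$, $(Y,g)$ be dynamical systems, $\pi\colon(X,f)\to(Y,g)$ a factor map such that $\pi^{-1}(y)$ is at most countable for every $y\in Y$, and let $z_1,z_2\in X$ with $\pi(z_1)\ne\pi(z_2)$. Let $\varepsilon=d(\pi(z_1),\pi(z_2))/3$ and let $\delta>0$ be such that $d(a,b)<\delta$ implies $d(\pi(a),\pi(b))<\varepsilon$ for $a,b\in X$. Suppose $S\subset X$ is a dense Mycielski syndetically scrambled set for $f$ such that for any two distinct $x_1,x_2\in S$ there is an infinite set $M\subset\mathbb N$ with $d(z_i,f^n(x_i))<\delta$ for $i=1,2$ and all $n\in M$. Then $g$ has a dense Mycielski syndetically $\varepsilon$-scrambled set $T\subset\pi(S)$. Moreover, if $f^k(S)\subset S$ for some $k\in\mathbb N$, then $T$ may be chosen with $g^k(T)\subset T$.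
   Context: Dynamical system: compact metric space with continuous self-map. Factor map: continuous surjection $\pi$ with $\pi\circ f=g\circ\pi$. Syndetic: subset of $\mathbb N$ meeting every set with arbitrarily long runs of consecutive integers. $\mathrm{Asy}$ and $\mathrm{SProx}$: pairs with $d(f^nx,f^ny)\to0$, resp. with $\{n:d(f^nx,f^ny)<\eta\}$ syndetic for all $\eta>0$. A set with at least two points is syndetically scrambled if all distinct pairs lie in $\mathrm{SProx}\setminus\mathrm{Asy}$; syndetically $\varepsilon$-scrambled if moreover $\limsup_n d(g^nx,g^ny)\ge\varepsilon$ for all distinct pairs. Mycielski set: countable union of Cantor sets. *)

(* Defs.v *)
From Stdlib Require Import Reals.
Open Scope R_scope.

Definition is_metric {X : Type} (d : X -> X -> R) : Prop :=
  (forall x y, 0 <= d x y) /\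
  (forall x y, d x y = 0 <-> x = y) /\
  (forall x y, d x y = d y x) /\
  (forall x y z, d x z <= d x y + d y z).

Definition open_set {X : Type} (d : X -> X -> R) (U : X -> Prop) : Prop :=
  forall x, U x -> exists r, 0 < r /\ forall y, d x y < r -> U y.

Definition compact_space {X : Type} (d : X -> X -> R) : Prop :=
  forall (I : Type) (U : I -> X -> Prop),
    (forall i, open_set d (U i)) -> (forall x, exists i, U i x) ->
    exists l : list I, forall x, exists i, List.In i l /\ U i x.

Definition compact_metric_space {X : Type} (d : X -> X -> R) : Prop :=
  is_metric d /\ compact_space d.

Definition continuous_map {X Y : Type} (dX : X -> X -> R) (dY : Y -> Y -> R)
  (h : X -> Y) : Prop :=
  forall x eps, 0 < eps -> exists del, 0 < del /\
    forall x', dX x x' < del -> dY (h x) (h x') < eps.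

Definition dynamical_system {X : Type} (d : X -> X -> R) (f : X -> X) : Prop :=
  compact_metric_space d /\ continuous_map d d f.

Definition factor_map {X Y : Type} (dX : X -> X -> R) (dY : Y -> Y -> R)
  (f : X -> X) (g : Y -> Y) (p : X -> Y) : Prop :=
  continuous_map dX dY p /\ (forall y, exists x, p x = y) /\
  (forall x, p (f x) = g (p x)).

Definition iter {X : Type} (n : nat) (f : X -> X) (x : X) : X := Nat.iter n f x.

Definition infinite_nat (A : nat -> Prop) : Prop :=
  forall N, exists n, (N <= n)%nat /\ A n.

Definition thick (B : nat -> Prop) : Prop :=
  forall L, exists m, forall i, (i < L)%nat -> B (m + i)%nat.

Definition syndetic (A : nat -> Prop) : Prop :=
  forall B, thick B -> exists n, A n /\ B n.

Definition Asy {X : Type} (d : X -> X -> R) (f : X -> X) (x y : X) : Prop :=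
  forall eta, 0 < eta -> exists N, forall n, (N <= n)%nat ->
    d (iter n f x) (iter n f y) < eta.

Definition SProx {X : Type} (d : X -> X -> R) (f : X -> X) (x y : X) : Prop :=
  forall eta, 0 < eta -> syndetic (fun n => d (iter n f x) (iter n f y) < eta).

Definition syndetically_scrambled {X : Type} (d : X -> X -> R) (f : X -> X)
  (S : X -> Prop) : Prop :=
  (exists x y, S x /\ S y /\ x <> y) /\
  (forall x y, S x -> S y -> x <> y -> SProx d f x y /\ ~ Asy d f x y).

(* limsup_n d(f^n x, f^n y) >= eps *)
Definition limsup_ge {X : Type} (d : X -> X -> R) (f : X -> X) (x y : X)
  (eps : R) : Prop :=
  forall eta, 0 < eta -> forall N, exists n, (N <= n)%nat /\
    eps - eta < d (iter n f x) (iter n f y).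

Definition syndetically_eps_scrambled {X : Type} (d : X -> X -> R)
  (f : X -> X) (eps : R) (S : X -> Prop) : Prop :=
  syndetically_scrambled d f S /\
  (forall x y, S x -> S y -> x <> y -> limsup_ge d f x y eps).

(* Cantor set: image of the Cantor space {0,1}^N (product topology) under a
   continuous injection; since {0,1}^N is compact and X is Hausdorff this is
   exactly a subset homeomorphic to the Cantor set. *)
Definition cantor_set {X : Type} (d : X -> X -> R) (C : X -> Prop) : Prop :=
  exists h : (nat -> bool) -> X,
    (forall s eps, 0 < eps -> exists N, forall t,
        (forall i, (i < N)%nat -> t i = s i) -> d (h s) (h t) < eps) /\
    (forall s t, h s = h t -> s = t) /\
    (forall x, C x <-> exists s, h s = x).

Definition mycielski {X : Type} (d : X -> X -> R) (S : X -> Prop) : Prop :=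
  exists C : nat -> X -> Prop, (forall n, cantor_set d (C n)) /\
    (forall x, S x <-> exists n, C n x).

Definition dense {X : Type} (d : X -> X -> R) (S : X -> Prop) : Prop :=
  forall x eps, 0 < eps -> exists s, S s /\ d x s < eps.

Definition countable_fibres {X Y : Type} (p : X -> Y) : Prop :=
  forall y, exists c : X -> nat, forall x1 x2,
    p x1 = y -> p x2 = y -> c x1 = c x2 -> x1 = x2.

(* Main.v *)
Require Import Defs.
From Stdlib Require Import Reals Lra List Classical.
Open Scope R_scope.

Lemma fold_min_pos {I : Type} (r : I -> R) (l : list I) :
  (forall i, 0 < r i) ->
  0 < fold_right (fun i acc => Rmin (r i) acc) 1 l /\
  (forall i, In i l -> fold_right (fun i acc => Rmin (r i) acc) 1 l <= r i).
Proof.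
  intros Hr; induction l as [|a l IH]; simpl.
  - split; [lra| tauto].
  - destruct IH as [H1 H2]; split.
    + apply Rmin_glb_lt; auto.
    + intros i [<-|Hi].
      * apply Rmin_l.
      * eapply Rle_trans; [apply Rmin_r| auto].
Qed.

Lemma unif_cont {X Y : Type} (dX : X -> X -> R) (dY : Y -> Y -> R) (h : X -> Y) :
  compact_metric_space dX -> is_metric dY -> continuous_map dX dY h ->
  forall eta, 0 < eta -> exists del, 0 < del /\
    forall a b, dX a b < del -> dY (h a) (h b) < eta.
Proof.
  intros [[Xp [Xz [Xs Xt]]] Hc] [Yp [Yz [Ys Yt]]] Hh eta Heta.
  set (I := {x : X & {r : R | 0 < r /\ forall x', dX x x' < r -> dY (h x) (h x') < eta/2}}).
  set (rr := fun i : I => proj1_sig (projT2 i) / 2).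
  assert (Hrr : forall i, 0 < rr i).
  { intros i; unfold rr; pose proof (proj2_sig (projT2 i)) as [Hr _]; lra. }
  destruct (Hc I (fun i y => dX (projT1 i) y < rr i)) as [l Hl].
  - intros i y Hy. exists (rr i - dX (projT1 i) y); split; [lra|].
    intros z Hz. pose proof (Xt (projT1 i) y z); lra.
  - intros x. destruct (Hh x (eta/2)) as [r [Hr Hr2]]; [lra|].
    exists (existT _ x (exist _ r (conj Hr Hr2))). unfold rr; simpl.
    rewrite (proj2 (Xz x x) eq_refl); lra.
  - destruct (fold_min_pos rr l Hrr) as [Hd1 Hd2].
    set (D := fold_right (fun i acc => Rmin (rr i) acc) 1 l) in *.
    exists D; split; [exact Hd1|].
    intros a b Hab. destruct (Hl a) as [[x [r [Hr Hr2]]] [Hin Ha]].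
    pose proof (Hd2 _ Hin) as Hle. unfold rr in Ha, Hle; simpl in Ha, Hle.
    assert (Hxb : dX x b < r) by (pose proof (Xt x a b); lra).
    pose proof (Hr2 a ltac:(lra)). pose proof (Hr2 b Hxb).
    pose proof (Yt (h a) (h x) (h b)). rewrite (Ys (h a) (h x)) in H1. lra.
Qed.

Lemma iter_comm {X Y : Type} (f : X -> X) (g : Y -> Y) (p : X -> Y) :
  (forall x, p (f x) = g (p x)) -> forall n x, p (iter n f x) = iter n g (p x).
Proof.
  intros H n x; induction n as [|n IH]; unfold iter in *; simpl; auto.
  rewrite H, IH; reflexivity.
Qed.

Lemma syndetic_mono (A B : nat -> Prop) : syndetic A -> (forall n, A n -> B n) -> syndetic B.
Proof. intros HA HAB C HC. destruct (HA C HC) as [n [H1 H2]]. eauto. Qed.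

Theorem proposition3p18
  (X Y : Type) (dX : X -> X -> R) (dY : Y -> Y -> R)
  (f : X -> X) (g : Y -> Y) (p : X -> Y)
  (HX : dynamical_system dX f) (HY : dynamical_system dY g)
  (Hp : factor_map dX dY f g p) (Hfib : countable_fibres p)
  (z1 z2 : X) (Hz : p z1 <> p z2)
  (eps : R) (Heps : eps = dY (p z1) (p z2) / 3)
  (delta : R) (Hdelta : 0 < delta)
  (Hdel : forall a b, dX a b < delta -> dY (p a) (p b) < eps)
  (S : X -> Prop) (HSd : dense dX S) (HSm : mycielski dX S)
  (HSs : syndetically_scrambled dX f S)
  (HSM : forall x1 x2, S x1 -> S x2 -> x1 <> x2 ->
     exists M : nat -> Prop, infinite_nat M /\
       forall n, M n -> dX z1 (iter n f x1) < delta /\ dX z2 (iter n f x2) < delta) :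
  (exists T : Y -> Prop,
     (forall y, T y -> exists x, S x /\ p x = y) /\
     dense dY T /\ mycielski dY T /\ syndetically_eps_scrambled dY g eps T) /\
  (forall k : nat, (forall x, S x -> S (iter k f x)) ->
   exists T : Y -> Prop,
     (forall y, T y -> exists x, S x /\ p x = y) /\
     dense dY T /\ mycielski dY T /\ syndetically_eps_scrambled dY g eps T /\
     (forall y, T y -> T (iter k g y))).
Proof.
  destruct HX as [HXc HXf]. destruct HY as [[HYm _] _].
  pose proof HYm as [Yp [Yz [Ys Yt]]].
  destruct Hp as [Hpc [Hps Hpf]].
  pose proof (iter_comm f g p Hpf) as Hit.
  assert (Hepos : 0 < eps).
  { rewrite Heps. pose proof (Yp (p z1) (p z2)).
    assert (dY (p z1) (p z2) <> 0) by (intro E; apply Hz; apply Yz; exact E). lra. }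
  assert (Hfar : forall x1 x2, S x1 -> S x2 -> x1 <> x2 -> forall N, exists n,
     (N <= n)%nat /\ eps < dY (iter n g (p x1)) (iter n g (p x2))).
  { intros x1 x2 H1 H2 Hne N. destruct (HSM x1 x2 H1 H2 Hne) as [M [HM HM2]].
    destruct (HM N) as [n [Hn HMn]]. exists n; split; auto.
    destruct (HM2 n HMn) as [A B].
    pose proof (Hdel _ _ A) as A'. pose proof (Hdel _ _ B) as B'.
    rewrite !Hit in A', B'.
    set (u := iter n g (p x1)) in *. set (v := iter n g (p x2)) in *.
    pose proof (Yt (p z1) u (p z2)). pose proof (Yt u v (p z2)).
    rewrite (Ys v (p z2)) in H0. lra. }
  assert (Hinj : forall x1 x2, S x1 -> S x2 -> p x1 = p x2 -> x1 = x2).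
  { intros x1 x2 H1 H2 E. destruct (classic (x1 = x2)) as [|Hne]; auto.
    destruct (Hfar x1 x2 H1 H2 Hne 0%nat) as [n [_ Hn]].
    rewrite E, (proj2 (Yz _ _) eq_refl) in Hn. lra. }
  set (T := fun y => exists x, S x /\ p x = y).
  assert (Hmain : (forall y, T y -> exists x, S x /\ p x = y) /\
     dense dY T /\ mycielski dY T /\ syndetically_eps_scrambled dY g eps T).
  { split; [auto|]. split; [|split].
    - intros y e He. destruct (Hps y) as [x <-].
      destruct (Hpc x e He) as [del [Hd Hd2]].
      destruct (HSd x del Hd) as [s [Hs Hs2]].
      exists (p s); split; [exists s; auto| auto].
    - destruct HSm as [C [HC1 HC2]].
      exists (fun n y => exists x, C n x /\ p x = y). split.
      + intros n. destruct (HC1 n) as [h [Hh1 [Hh2 Hh3]]].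
        exists (fun s => p (h s)). split; [|split].
        * intros s e He. destruct (Hpc (h s) e He) as [del [Hd Hd2]].
          destruct (Hh1 s del Hd) as [N HN]. exists N. intros t Ht. auto.
        * intros s t E. apply Hh2. apply Hinj; auto;
            apply HC2; exists n; apply Hh3; eauto.
        * intros y; split.
          -- intros [x [Hx <-]]. apply Hh3 in Hx. destruct Hx as [s <-]. eauto.
          -- intros [s <-]. exists (h s); split; auto. apply Hh3; eauto.
      + intros y; split.
        * intros [x [Hx <-]]. apply HC2 in Hx. destruct Hx as [n Hn]. eauto.
        * intros [n [x [Hx <-]]]. exists x; split; auto. apply HC2; eauto.
    - assert (Hdist : forall y1 y2, T y1 -> T y2 -> y1 <> y2 ->
         exists x1 x2, S x1 /\ S x2 /\ x1 <> x2 /\ p x1 = y1 /\ p x2 = y2).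
      { intros y1 y2 [x1 [H1 <-]] [x2 [H2 <-]] Hne.
        exists x1, x2; repeat split; auto. intros ->; auto. }
      split; [split|].
      + destruct HSs as [[x [y [Hx [Hy Hxy]]]] _].
        exists (p x), (p y). split; [exists x; auto|]. split; [exists y; auto|].
        intro E; apply Hxy; apply Hinj; auto.
      + intros y1 y2 Hy1 Hy2 Hne.
        destruct (Hdist y1 y2 Hy1 Hy2 Hne) as [x1 [x2 [H1 [H2 [Hx [<- <-]]]]]].
        split.
        * intros eta Heta.
          destruct (unif_cont dX dY p HXc HYm Hpc eta Heta) as [del [Hd Hd2]].
          destruct HSs as [_ HS2]. destruct (HS2 x1 x2 H1 H2 Hx) as [Hsp _].
          apply (syndetic_mono _ _ (Hsp del Hd)). intros n Hn.
          rewrite <- !Hit. auto.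
        * intros Ha. destruct (Ha eps Hepos) as [N HN].
          destruct (Hfar x1 x2 H1 H2 Hx N) as [n [Hn Hn2]].
          pose proof (HN n Hn). lra.
      + intros y1 y2 Hy1 Hy2 Hne eta Heta N.
        destruct (Hdist y1 y2 Hy1 Hy2 Hne) as [x1 [x2 [H1 [H2 [Hx [<- <-]]]]]].
        destruct (Hfar x1 x2 H1 H2 Hx N) as [n [Hn Hn2]].
        exists n; split; auto; lra. }
  split.
  - exists T; exact Hmain.
  - intros k Hk. exists T. destruct Hmain as [A [B [C D]]].
    split; [exact A|split; [exact B|split; [exact C|split; [exact D|]]]].
    intros y [x [Hx <-]]. exists (iter k f x); split; auto.
Qed.
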